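(* Let $k\ge3$ and $1\le s\le k$, $\mathbf n=(n_1,\dots,n_k)$, $r\le\min\{n_1,\dots,n_s\}$. If a tensor $\mathcal A\in P_s(\mathbf n,r)$ has a decomposition $\mathcal A=\sum_{i=1}^r\sigma_i\mathbf a^{(1)}_i\otimes\cdots\otimes\mathbf a^{(k)}_i$ of the type defining $P_s(\mathbf n,r)$ in which the factor matrices $A^{(l)}=[\mathbf a^{(l)}_1,\dots,\mathbf a^{(l)}_r]$, $l=s+1,\dots,k$, have full column rank, then $\mathcal A$ is identifiable. Moreover, if $s\ge3$, then every tensor in $P_s(\mathbf n,r)$ is identifiable.
   Context: $P_s(\mathbf n,r)$ is the set of tensors $\sum_{i=1}^r\sigma_i\mathbf a^{(1)}_i\otimes\cdots\otimes\mathbf a^{(k)}_i$ with $\sigma_i\in\mathbb R$, all $\mathbf a^{(l)}_i\in\mathbb R^{n_l}$ unit vectors, and for each $l\le s$ the vectors $\mathbf a^{(l)}_1,\dots,\mathbf a^{(l)}_r$ pairwise orthogonal. The rank of a tensor is the least $m$ such that it is a sum of $m$ rank-one tensors $\lambda_j\mathbf u^{(1)}_j\otimes\cdots\otimes\mathbf u^{(k)}_j$; a rank decomposition uses exactly the rank many terms. A tensor is identifiable if its rank decomposition is essentially unique: any two rank decompositions $\sum_j\lambda_j\mathbf u^{(1)}_j\otimes\cdots\otimes\mathbf u^{(k)}_j=\sum_j\mu_j\mathbf v^{(1)}_j\otimes\cdots\otimes\mathbf v^{(k)}_j$ differ by a permutation $\sigma$ of the terms and nonzero rescalings $\mathbf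 v^{(i)}_{\sigma(j)}=\alpha^{(i)}_j\mathbf u^{(i)}_j$ with $(\prod_i\alpha^{(i)}_j)\mu_{\sigma(j)}=\lambda_j$. *)

(* Defs.v *)
From HB Require Import structures.
From mathcomp Require Import all_boot all_order all_algebra all_fingroup.
From mathcomp Require Import reals.
Set Implicit Arguments. Unset Strict Implicit. Unset Printing Implicit Defensive.
Import Order.TTheory GRing.Theory Num.Theory.
Local Open Scope ring_scope.

Section Tensors.
Variable R : realType.
Variable k : nat.
Variable n : 'I_k -> nat.

Definition tindex := forall l : 'I_k, 'I_(n l).
Definition tensor := tindex -> R.

Definition vfam := forall l : 'I_k, 'I_(n l) -> R.

Definition dotv (p : nat) (v w : 'I_p -> R) : R := \sum_(i < p) v i * w i.
Definition unitv (p : nat) (v : 'I_p -> R) : Prop := dotv v v = 1.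

Definition tsum (m : nat) (lam : 'I_m -> R) (u : 'I_m -> vfam) : tensor :=
  fun i => \sum_(j < m) lam j * \prod_(l < k) u j l (i l).

Definition has_decomp (T : tensor) (m : nat) : Prop :=
  exists (lam : 'I_m -> R) (u : 'I_m -> vfam), tsum lam u = T.

Definition is_rank (T : tensor) (m : nat) : Prop :=
  has_decomp T m /\ forall m', has_decomp T m' -> (m <= m')%N.

Definition identifiable (T : tensor) : Prop :=
  forall (m : nat) (lam mu : 'I_m -> R) (u v : 'I_m -> vfam),
    is_rank T m -> tsum lam u = T -> tsum mu v = T ->
    exists (p : 'S_m) (alpha : 'I_m -> 'I_k -> R),
      forall j : 'I_m,
        (forall l, alpha j l != 0) /\
        (forall l (x : 'I_(n l)), v (p j) l x = alpha j l * u j l x) /\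
        (\prod_(l < k) alpha j l) * mu (p j) = lam j.

(* a decomposition of the type defining P_s(n,r): unit vectors, and for the
   first s modes (0-based indices l < s) pairwise orthogonal factor vectors *)
Definition Ps_decomp (s r : nat) (a : 'I_r -> vfam) : Prop :=
  (forall (i : 'I_r) (l : 'I_k), unitv (a i l)) /\
  (forall l : 'I_k, (l < s)%N ->
     forall i j : 'I_r, i != j -> dotv (a i l) (a j l) = 0).

Definition in_Ps (s r : nat) (T : tensor) : Prop :=
  exists (sigma : 'I_r -> R) (a : 'I_r -> vfam), Ps_decomp s a /\ tsum sigma a = T.

Definition factor_mx (r : nat) (a : 'I_r -> vfam) (l : 'I_k) : 'M[R]_(n l, r) :=
  \matrix_(x < n l, j < r) a j l x.

End Tensors.

(* Main.v *)
Require Import Defs.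
From HB Require Import structures.
From mathcomp Require Import all_boot all_order all_algebra all_fingroup.
From mathcomp Require Import reals.
From mathcomp Require Import ring.
Import Order.TTheory GRing.Theory Num.Theory.
Local Open Scope ring_scope.

Set Implicit Arguments. Unset Strict Implicit. Unset Printing Implicit Defensive.
Section CL.
Variable F : fieldType.

Lemma triple_entry r m (P Q : 'M[F]_(r,m)) (h : 'I_m -> F) i0 i1 :
  (P *m diag_mx (\row_j h j) *m Q^T) i0 i1 = \sum_j P i0 j * Q i1 j * h j.
Proof.
rewrite mul_mx_diag !mxE; apply: eq_bigr => j _; rewrite !mxE; ring.
Qed.

Lemma delta_entry r (X Y : 'M[F]_r) (c : F) t a b :
  (X *m (c *: delta_mx t t) *m Y) a b = c * X a t * Y t b.
Proof.
rewrite mxE (bigD1 t) //= big1 => [|y yt].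
  rewrite mxE (bigD1 t) //= big1 => [|x xt].
    by rewrite !mxE !eqxx /=; ring.
  by rewrite !mxE (negbTE xt) /=; ring.
rewrite mxE big1 ?mul0r // => x _.
by rewrite !mxE (negbTE yt) andbF /=; ring.
Qed.

Lemma CL r m (P Q : 'M[F]_(r,m)) (g : 'I_r -> 'I_m -> F) (sig : 'I_r -> F) :
  (m <= r)%N -> (forall i, sig i != 0) ->
  (forall i0 i1 t, \sum_j P i0 j * Q i1 j * g t j
                   = sig i0 * ((i0 == i1) && (i1 == t))%:R) ->
  m = r /\ exists e : 'I_m -> 'I_r, injective e /\ (forall i, exists j, e j = i)
     /\ (forall i j, i != e j -> P i j = 0 /\ Q i j = 0).
Proof.
move=> hmr hsig H.
pose D := diag_mx (\row_j \sum_t g t j).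
have HD : P *m D *m Q^T = diag_mx (\row_i sig i).
  apply/matrixP => i0 i1; rewrite triple_entry !mxE.
  under eq_bigr do rewrite mulr_sumr.
  rewrite exchange_big /=.
  under eq_bigr do rewrite H.
  case: (eqVneq i0 i1) => [<-|ne] /=.
    rewrite (bigD1 i0) //= big1 ?eqxx ?mulr1 ?addr0 // => t ti.
    by rewrite eq_sym (negbTE ti) ?andbF mulr0.
  by rewrite big1 ?mulr0n // => t _; rewrite mulr0.
have Hu : diag_mx (\row_i sig i) \in unitmx.
  rewrite unitmxE det_diag unitfE; apply/prodf_neq0 => i _; rewrite mxE; exact: hsig.
have Emr : m = r.
  apply/eqP; rewrite eqn_leq hmr /=.
  rewrite -{1}(mxrank_unit Hu) -HD.
  apply: leq_trans (mxrankM_maxl _ _) _.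
  apply: leq_trans (mxrankM_maxl _ _) _.
  exact: rank_leq_col.
subst m; split=> //.
move: Hu; rewrite -HD -mulmxA unitmx_mul => /andP[PU]; rewrite unitmx_mul => /andP[_ QU].
pose X := invmx P; pose Y := invmx Q^T.
have HDt t : forall a b, a != b -> X a t * Y t b = 0.
  move=> a b ab.
  have E : diag_mx (\row_j g t j) = X *m (sig t *: delta_mx t t) *m Y.
    have -> : sig t *: delta_mx t t = P *m diag_mx (\row_j g t j) *m Q^T.
      apply/matrixP => i0 i1; rewrite triple_entry H !mxE.
      case: (eqVneq i0 i1) => [<-|ne] /=.
        by case: (eqVneq i0 t) => [->|] //=; rewrite ?mulr1 ?mulr0.
      by case: (eqVneq i0 t) => [e0|] //=; rewrite ?mulr0 //; subst; rewrite eq_sym (negbTE ne) /= mulr0.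
    by rewrite /X /Y mulmxA mulKmx // mulmxK.
  move/matrixP: E => /(_ a b); rewrite delta_entry !mxE (negbTE ab) mulr0n.
  move/esym/eqP; rewrite -mulrA mulf_eq0 (negbTE (hsig t)) /= => /eqP //.
have PX : P *m X = 1%:M by rewrite mulmxV.
have YQ : Y *m Q^T = 1%:M by rewrite mulVmx.
have Xnz t : exists a, X a t != 0.
  apply/existsP; apply: contraT; rewrite negb_exists => /forallP hx.
  move/matrixP: (PX) => /(_ t t); rewrite !mxE eqxx big1 ?oner_eq0 //=.
    by move/eqP; rewrite eq_sym oner_eq0.
  by move=> a _; move: (hx a); rewrite negbK => /eqP ->; rewrite mulr0.
have Ynz t : exists b, Y t b != 0.
  apply/existsP; apply: contraT; rewrite negb_exists => /forallP hx.
  move/matrixP: (YQ) => /(_ t t); rewrite !mxE eqxx big1 //=.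
    by move/eqP; rewrite eq_sym oner_eq0.
  by move=> a _; move: (hx a); rewrite negbK => /eqP ->; rewrite mul0r.
pose pi t := odflt t [pick a | X a t != 0].
have piX t : X (pi t) t != 0.
  rewrite /pi; case: pickP => //= h; have [a ha] := Xnz t; by move: (h a); rewrite ha.
have Xz t a : a != pi t -> X a t = 0.
  move=> ha; have [b hb] := Ynz t.
  case: (eqVneq (pi t) b) => [eb|nb].
    subst b; apply/eqP; move: (HDt t a (pi t) ha) => /eqP; rewrite mulf_eq0 (negbTE hb) orbF //.
  by move: (HDt t (pi t) b nb) => /eqP; rewrite mulf_eq0 (negbTE hb) (negbTE (piX t)).
have Ypi t : Y t (pi t) != 0.
  have [b hb] := Ynz t; case: (eqVneq (pi t) b) => [->//|nb].
  by move: (HDt t (pi t) b nb) => /eqP; rewrite mulf_eq0 (negbTE hb) (negbTE (piX t)).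
have Yz t b : b != pi t -> Y t b = 0.
  move=> hb; apply/eqP; move: (HDt t (pi t) b); rewrite eq_sym => /(_ hb) /eqP.
  by rewrite mulf_eq0 (negbTE (piX t)).
have PP i t : P i (pi t) * X (pi t) t = (i == t)%:R.
  move/matrixP: (PX) => /(_ i t); rewrite !mxE (bigD1 (pi t)) //= big1 ?addr0 //.
  by move=> a ha; rewrite Xz ?mulr0.
have QQ i t : Y t (pi t) * Q i (pi t) = (t == i)%:R.
  move/matrixP: (YQ) => /(_ t i); rewrite !mxE (bigD1 (pi t)) //= big1 ?addr0 ?mxE //.
  by move=> a ha; rewrite Yz ?mul0r.
have Pz i t : i != t -> P i (pi t) = 0.
  move=> it; move: (PP i t); rewrite (negbTE it) => /eqP; rewrite mulf_eq0 (negbTE (piX t)) orbF.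
  by move/eqP.
have Qz i t : i != t -> Q i (pi t) = 0.
  move=> it; move: (QQ i t); rewrite eq_sym (negbTE it) => /eqP; rewrite mulf_eq0 (negbTE (Ypi t)) /=.
  by move/eqP.
have Pnz t : P t (pi t) != 0.
  by move: (PP t t); rewrite eqxx => /eqP; apply: contraTneq => ->; rewrite mul0r eq_sym oner_eq0.
have piinj : injective pi.
  move=> t t' E; apply/eqP; apply: contraT => ne.
  by move: (Pz t t' ne); rewrite -E => /eqP; rewrite (negbTE (Pnz t)).
exists (invF piinj); split; first exact: (can_inj (f_invF piinj)).
split; first by move=> i; exists (pi i); rewrite invF_f.
move=> i j hij; rewrite -(f_invF piinj j); split; [exact: Pz | exact: Qz].
Qed.
End CL.

Section Contr.
Variables (R : realType) (k : nat) (n : 'I_k -> nat).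

Definition upd (x : tindex n) (l : 'I_k) (y : 'I_(n l)) : tindex n :=
  @dfwith _ (fun l => 'I_(n l)) x l y.

Definition contr1 (l : 'I_k) (w : 'I_(n l) -> R) (F : tindex n -> R) : tindex n -> R :=
  fun x => \sum_(y < n l) w y * F (upd x y).

Definition contrL (L : seq 'I_k) (w : vfam R n) (F : tindex n -> R) :=
  foldr (fun l G => contr1 (w l) G) F L.

Lemma contrL_tsum (L : seq 'I_k) (w : vfam R n) m (lam : 'I_m -> R) (u : 'I_m -> vfam R n) :
  uniq L -> forall x,
  contrL L w (tsum lam u) x =
  \sum_j lam j * ((\prod_(l <- L) dotv (w l) (u j l)) * \prod_(l | l \notin L) u j l (x l)).
Proof.
elim: L => [|l L IH].
  move=> _ x; rewrite /= /tsum; apply: eq_bigr => j _; rewrite big_nil mul1r.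
  by congr (_ * _); apply: eq_bigl => l; rewrite in_nil.
move=> /andP[lL uL] x.
change (contrL (l :: L) w (tsum lam u) x) with (contr1 (w l) (contrL L w (tsum lam u)) x).
rewrite /contr1.
under eq_bigr do rewrite IH // mulr_sumr.
rewrite exchange_big /=; apply: eq_bigr => j _.
have E y : \prod_(l0 | l0 \notin L) u j l0 (upd x y l0)
   = u j l y * \prod_(l0 | l0 \notin l :: L) u j l0 (x l0).
  rewrite (bigD1 l) //= /upd dfwith_in; congr (_ * _).
  apply: eq_big => l0; first by rewrite in_cons negb_or andbC eq_sym.
  by case/andP => _ ne; rewrite dfwith_out // eq_sym.
under eq_bigr do rewrite E.
rewrite big_cons /dotv.
rewrite !mulr_suml mulr_sumr.
by apply: eq_bigr => y _; ring.
Qed.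

Lemma tsum_ID m (lam : 'I_m -> R) (u : 'I_m -> vfam R n) m' (mu : 'I_m' -> R) (v : 'I_m' -> vfam R n) (x0 : tindex n) :
  tsum lam u = tsum mu v -> forall w : vfam R n,
  \sum_j lam j * \prod_l dotv (w l) (u j l) = \sum_j mu j * \prod_l dotv (w l) (v j l).
Proof.
move=> E w.
have h1 := contrL_tsum w lam u (index_enum_uniq _) x0.
have h2 := contrL_tsum w mu v (index_enum_uniq _) x0.
rewrite E h2 in h1.
have P1 m1 (c : 'I_m1 -> R) (z : 'I_m1 -> vfam R n) :
  \sum_j c j * ((\prod_(l <- index_enum 'I_k) dotv (w l) (z j l)) * \prod_(l | l \notin index_enum 'I_k) z j l (x0 l))
  = \sum_j c j * \prod_l dotv (w l) (z j l).
  apply: eq_bigr => j _; rewrite [X in _ * (_ * X)]big1 ?mulr1 //.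
  by move=> l; rewrite mem_index_enum.
by rewrite -P1 -h1 P1.
Qed.
End Contr.

Unset Implicit Arguments.

Section KL.
Variables (R : realType) (k : nat) (n : 'I_k -> nat).
Hypothesis hk : (2 < k)%N.
Let o0 : 'I_k := Ordinal (leq_trans (isT : (1 <= 3)%N) hk).
Let o1 : 'I_k := Ordinal (leq_trans (isT : (2 <= 3)%N) hk).
Let o2 : 'I_k := Ordinal hk.
Let o10 : o1 != o0. Proof. by []. Qed.
Let o20 : o2 != o0. Proof. by []. Qed.
Let o21 : o2 != o1. Proof. by []. Qed.

Variables (r : nat) (sig : 'I_r -> R) (a d : 'I_r -> vfam R n).
Hypotheses (Hsig : forall i, sig i != 0) (Hda : forall i (l : 'I_k), dotv (d i l) (a i l) = 1)
 (Hdo : forall l : 'I_k, (l < 3)%N -> forall i j, i != j -> dotv (d i l) (a j l) = 0).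

Lemma prod_zero (F : 'I_k -> R) l0 : F l0 = 0 -> \prod_l F l = 0.
Proof. by move=> h; rewrite (bigD1 l0) //= h mul0r. Qed.

Lemma dotv_scale p (w v : 'I_p -> R) c : dotv w (fun y => c * v y) = c * dotv w v.
Proof. by rewrite /dotv mulr_sumr; apply: eq_bigr => y _; ring. Qed.

Lemma dotv_basis p (y : 'I_p) (v : 'I_p -> R) : dotv (fun z => (z == y)%:R) v = v y.
Proof.
rewrite /dotv (bigD1 y) //= eqxx mul1r big1 ?addr0 // => z /negbTE ->; by rewrite mul0r.
Qed.

Definition sel (i0 i1 t : 'I_r) (l : 'I_k) := if l == o0 then i0 else if l == o1 then i1 else t.

Lemma R1 i0 i1 t : \sum_i sig i * \prod_l dotv (d (sel i0 i1 t l) l) (a i l)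
   = sig i0 * ((i0 == i1) && (i1 == t))%:R.
Proof.
rewrite (bigD1 i0) //= [X in _ + X]big1 ?addr0 => [|i ii0]; last first.
  by rewrite (prod_zero _ o0) ?mulr0 // /sel eqxx Hdo // eq_sym.
case: (eqVneq i0 i1) => [e1|n1] /=; last first.
  by rewrite (prod_zero _ o1) ?mulr0 // /sel (negbTE o10) eqxx Hdo // eq_sym.
case: (eqVneq i1 t) => [e2|n2] /=; last first.
  rewrite (prod_zero _ o2) ?mulr0 // /sel (negbTE o20) (negbTE o21) Hdo //.
  by subst; rewrite eq_sym.
subst; rewrite big1 ?mulr1 // => l _; rewrite /sel; by case: ifP => _; [|case: ifP => _]; rewrite Hda.
Qed.

Definition om (l : 'I_k) := if l == o0 then o1 else o0.
Lemma om_ne l : om l != l.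
Proof. rewrite /om; case: (eqVneq l o0) => [->|]; by rewrite ?o10 // eq_sym. Qed.
Lemma om_lt l : (om l < 3)%N.
Proof. by rewrite /om; case: ifP. Qed.

Definition wb (i : 'I_r) (l : 'I_k) (y : 'I_(n l)) : vfam R n :=
  @dfwith _ (fun l => 'I_(n l) -> R) (fun l' => d i l') l (fun z => (z == y)%:R).

Lemma R2 i l y : \sum_i' sig i' * \prod_l' dotv (wb i l y l') (a i' l') = sig i * a i l y.
Proof.
rewrite (bigD1 i) //= [X in _ + X]big1 ?addr0 => [|i' ii']; last first.
  rewrite (prod_zero _ (om l)) ?mulr0 // /wb dfwith_out; last by rewrite eq_sym om_ne.
  by rewrite Hdo ?om_lt // eq_sym.
congr (_ * _); rewrite (bigD1 l) //= /wb dfwith_in dotv_basis big1 ?mulr1 // => l' ll'.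
by rewrite dfwith_out ?Hda // eq_sym.
Qed.

Lemma KL m (lam : 'I_m -> R) (u : 'I_m -> vfam R n) : (m <= r)%N -> tsum lam u = tsum sig a ->
  m = r /\ exists e : 'I_m -> 'I_r, injective e /\ (forall i, exists j, e j = i) /\
   forall j, lam j * \prod_l dotv (d (e j) l) (u j l) = sig (e j) /\
     forall l, dotv (d (e j) l) (u j l) != 0 /\
       forall x, u j l x = dotv (d (e j) l) (u j l) * a (e j) l x.
Proof.
move=> hmr ET.
case: (posnP r) => [r0 | rpos].
  have m0 : m = 0%N by apply/eqP; rewrite -leqn0 -r0.
  subst m r; split => //; exists id; split => //; split; [by move=> i; exists i | by case].
pose i00 : 'I_r := Ordinal rpos.
have npos l : (0 < n l)%N.
  rewrite lt0n; apply/negP => /eqP E; move: (Hda i00 l); rewrite /dotv big1.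
    by move/eqP; rewrite eq_sym oner_eq0.
  by move=> y _; have := leq_trans (ltn_ord y) (eq_leq E).
pose x0 : tindex n := fun l => Ordinal (npos l).
have ID := tsum_ID x0 ET.
pose P := \matrix_(i < r, j < m) dotv (d i o0) (u j o0).
pose Q := \matrix_(i < r, j < m) dotv (d i o1) (u j o1).
pose g t j := lam j * \prod_(l | (l != o0) && (l != o1)) dotv (d t l) (u j l).
have H3 : forall i0 i1 t, \sum_j P i0 j * Q i1 j * g t j = sig i0 * ((i0 == i1) && (i1 == t))%:R.
  move=> i0 i1 t; rewrite -R1 -ID; apply: eq_bigr => j _.
  rewrite !mxE /g [in RHS](bigD1 o0) //= [in RHS](bigD1 o1) //= /sel eqxx (negbTE o10) eqxx.
  rewrite [in RHS](eq_bigr (fun l => dotv (d t l) (u j l))); first by ring.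
  by move=> l /andP[/negbTE -> /negbTE ->].
have [Emr [e [einj [esurj ez]]]] := @CL _ r m P Q g sig hmr Hsig H3.
split=> //; exists e; split=> //; split=> // j.
set i := e j.
have zP j' : j' != j -> dotv (d i o0) (u j' o0) = 0 /\ dotv (d i o1) (u j' o1) = 0.
  move=> jj; have := ez i j'; rewrite !mxE; apply.
  by rewrite /i; apply: contra jj => /eqP /einj ->.
have Hl l : forall y, sig i * a i l y
     = lam j * (u j l y * \prod_(l' | l' != l) dotv (d i l') (u j l')).
  move=> y; rewrite -R2 -ID (bigD1 j) //= [X in _ + X]big1 ?addr0 => [|j' jj']; last first.
    rewrite (prod_zero _ (om l)) ?mulr0 // /wb dfwith_out; last by rewrite eq_sym om_ne.
    have [h0 h1] := zP j' jj'; rewrite /om; case: ifP => _; [exact: h1|exact: h0].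
  congr (_ * _); rewrite (bigD1 l) //= /wb dfwith_in dotv_basis; congr (_ * _).
  by apply: eq_bigr => l' ll'; rewrite dfwith_out // eq_sym.
have Hc l : sig i = lam j * \prod_(l' | l' != l) dotv (d i l') (u j l') * dotv (d i l) (u j l).
  have := congr1 (dotv (d i l)) (boolp.funext (Hl l)).
  by rewrite dotv_scale Hda mulr1 => ->; rewrite /dotv !mulr_sumr; apply: eq_bigr => y _; ring.
have Eprod : lam j * \prod_l dotv (d i l) (u j l) = sig i.
  have := ID (fun l => d i l).
  rewrite (bigD1 j) //= [X in _ + X = _]big1 ?addr0 => [|j' jj']; last first.
    by rewrite (prod_zero _ o0) ?mulr0 //; case: (zP j' jj').
  move=> ->; rewrite (bigD1 i) //= [X in _ + X]big1 ?addr0 => [|i' ii']; last first.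
    by rewrite (prod_zero _ o0) ?mulr0 // Hdo // eq_sym.
  by rewrite big1 ?mulr1 // => l _; rewrite Hda.
split=> // l.
have Hne : lam j * \prod_(l' | l' != l) dotv (d i l') (u j l') * dotv (d i l) (u j l) != 0.
  by rewrite -Hc.
move: Hne; rewrite mulf_eq0 negb_or => /andP[lK cne]; split=> // x.
apply: (mulIf lK).
have hy := Hl l x; rewrite (Hc l) in hy.
transitivity (lam j * \prod_(l' | l' != l) dotv (d i l') (u j l') * dotv (d i l) (u j l) * a i l x).
  by rewrite hy; ring.
by ring.
Qed.
End KL.

Lemma FINAL (R : realType) (k : nat) (n : 'I_k -> nat) (hk : (2 < k)%N) (r : nat)
  (sig : 'I_r -> R) (a d : 'I_r -> vfam R n) :
  (forall i (l : 'I_k), dotv (d i l) (a i l) = 1) ->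
  (forall l : 'I_k, (l < 3)%N -> forall i j, i != j -> dotv (d i l) (a j l) = 0) ->
  identifiable (tsum sig a).
Proof.
move=> Hda Hdo m lam mu u v [_ Hmin] Eu Ev.
pose S := [set i : 'I_r | sig i != 0].
pose ev : 'I_#|S| -> 'I_r := enum_val.
pose sig' := fun j => sig (ev j).
pose a' := fun j => a (ev j).
pose d' := fun j => d (ev j).
have Esum : tsum sig' a' = tsum sig a.
  apply: boolp.funext => x; rewrite /tsum; symmetry.
  rewrite (bigID (fun i => i \in S)) /= [X in _ + X]big1 ?addr0; first exact: big_enum_val.
  by move=> i; rewrite inE negbK => /eqP ->; rewrite mul0r.
have hm : (m <= #|S|)%N by apply: Hmin; exists sig', a'.
have Hsig' j : sig' j != 0.
  by have := enum_valP j; rewrite inE.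
have Hda' i (l : 'I_k) : dotv (d' i l) (a' i l) = 1 by apply: Hda.
have Hdo' (l : 'I_k) : (l < 3)%N -> forall i j, i != j -> dotv (d' i l) (a' j l) = 0.
  move=> hl i j ne; apply: Hdo => //; apply: contra ne => /eqP /enum_val_inj ->; exact: eqxx.
have [Em [e1 [i1 [_ H1]]]] := @KL R k n hk #|S| sig' a' d' Hsig' Hda' Hdo' m lam u hm (etrans Eu (esym Esum)).
have [_ [e2 [i2 [_ H2]]]] := @KL R k n hk #|S| sig' a' d' Hsig' Hda' Hdo' m mu v hm (etrans Ev (esym Esum)).
subst m.
pose pu := perm i1; pose pv := perm i2.
exists (pu * pv^-1)%g.
exists (fun j l => dotv (d' (e2 ((pu * pv^-1)%g j)) l) (v ((pu * pv^-1)%g j) l) / dotv (d' (e1 j) l) (u j l)).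
move=> j.
have Ep : e2 ((pu * pv^-1)%g j) = e1 j.
  by rewrite permM -(permE i2) -/pv permKV permE.
have [P1 H1'] := H1 j; have [P2 H2'] := H2 ((pu * pv^-1)%g j).
rewrite Ep in P2 H2' *.
split; [|split].
- move=> l; rewrite mulf_eq0 invr_eq0 negb_or (H2' l).1 (H1' l).1 //.
- move=> l x; rewrite ((H2' l).2 x) ((H1' l).2 x) mulrA divfK //; exact: (H1' l).1.
have hne : \prod_l dotv (d' (e1 j) l) (u j l) != 0.
  by apply/prodf_neq0 => l _; exact: (H1' l).1.
apply: (mulIf hne); rewrite prodf_div mulrAC divfK // P1 -P2 mulrC //.
Qed.

Theorem proposition3p2 (R : realType) (k : nat) (n : 'I_k -> nat) (s r : nat) :
  (3 <= k)%N -> (1 <= s <= k)%N ->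
  (forall l : 'I_k, (l < s)%N -> (r <= n l)%N) ->
  (forall (sigma : 'I_r -> R) (a : 'I_r -> vfam R n),
      Ps_decomp s a ->
      (forall l : 'I_k, (s <= l)%N -> \rank (factor_mx a l) = r) ->
      identifiable (tsum sigma a))
  /\
  ((3 <= s)%N -> forall T : tensor R n, in_Ps s r T -> identifiable T).
Proof.
move=> hk hs hn; split.
  move=> sigma a [Hunit Horth] Hrank.
  pose d i (l : 'I_k) := if (l < s)%N then a i l else (fun x => pinvmx (factor_mx a l) i x).
  have Hpinv (l : 'I_k) : ~~ (l < s)%N -> forall i j,
      dotv (fun x => pinvmx (factor_mx a l) i x) (a j l) = (i == j)%:R.
    move=> hl i j.
    have hf : row_full (factor_mx a l) by rewrite /row_full Hrank // leqNgt.
    have := mulmxKpV (submx_full 1%:M hf); rewrite mul1mx => /matrixP /(_ i j).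
    rewrite !mxE => <-; rewrite /dotv; apply: eq_bigr => x _; congr (_ * _); by rewrite /factor_mx mxE.
  apply: (@FINAL R k n hk r sigma a d).
    move=> i l; rewrite /d; case: ifP => hl; first exact: Hunit.
    by rewrite Hpinv ?hl // eqxx.
  move=> l hl3 i j ne; rewrite /d; case: ifP => hl; first exact: Horth.
  by rewrite Hpinv ?hl // (negbTE ne).
move=> hs3 T [sigma [a [[Hunit Horth] <-]]].
apply: (@FINAL R k n hk r sigma a a); first exact: Hunit.
move=> l hl i j ne; apply: Horth => //; exact: leq_trans hl hs3.
Qed.
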